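(* Let $\lambda_1,\lambda_2>0$ and let the input domain be the set of integers $\mathbb{Z}$. Let $\mathcal{M}_{\mathrm{skell}(\lambda_1,\lambda_2)}$ be the algorithm that adds to its input a random integer with the Skellam$(\lambda_1,\lambda_2)$ distribution, and let $f_Z(\cdot;\lambda_1,\lambda_2)$ be the probability mass function of that distribution. A bounded row vector $\vec x=(\dots,x_{-2},x_{-1},x_0,x_1,x_2,\dots)$ belongs to $\mathrm{rowcone}(\{\mathcal{M}_{\mathrm{skell}(\lambda_1,\lambda_2)}\})$ if for all integers $k$, $$\sum_{j=-\infty}^{\infty}(-1)^j f_Z(j;\lambda_1,\lambda_2)\,x_{k+j}\ \ge\ 0.$$
   Context: A random variable has the Skellam$(\lambda_1,\lambda_2)$ distribution if it equals $X-Y$ with $X,Y$ independent, $X\sim$ Poisson$(\lambda_1)$ and $Y\sim$ Poisson$(\lambda_2)$ (Poisson$(\lambda)$ has mass $e^{-\lambda}\lambda^k/k!$ on nonnegative integers $k$). An algorithm is identified with its output probabilities. For algorithms $\mathcal{M}$, $\mathcal{A}$ with $\mathrm{range}(\mathcal{M})\subseteq\mathrm{domain}(\mathcal{A})$ and independent randomness, $\mathcal{A}\circ\mathcal{M}$ runs $\mathcal{M}$ then $\mathcal{A}$ on its output. $\mathrm{CNF}(\mathrm{Priv})$ of a set of algorithms with domain $\mathbb{Z}$ is the smallest set $S$ containing $\mathrm{Priv}$ such that $\mathcal{M}\in S$ implies $\mathcal{A}\circ\mathcal{M}\in S$ for every such $\mathcal{A}$, and $\mathcal{M}_1,\mathcal{M}_2\in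 S$, $t\in[0,1]$ implies that the algorithm running $\mathcal{M}_1$ with probability $t$ and $\mathcal{M}_2$ with probability $1-t$ is in $S$. $\mathrm{rowcone}(\mathrm{Priv})=\{(c\,P[\mathcal{M}(n)=\omega])_{n\in\mathbb{Z}} : c\ge0,\ \mathcal{M}\in\mathrm{CNF}(\mathrm{Priv}),\ \omega\in\mathrm{range}(\mathcal{M})\}$. *)

(* Defs.v *)
From Stdlib Require Import Reals ZArith.
From Coquelicot Require Import Coquelicot.
Open Scope R_scope.

Definition is_sumZ (f : Z -> R) (l : R) : Prop :=
  exists a b : R,
    is_series (fun k : nat => f (Z.of_nat k)) a /\
    is_series (fun k : nat => f (- Z.of_nat (S k))%Z) b /\
    a + b = l.

Definition sumZ (f : Z -> R) : R :=
  Series (fun k : nat => f (Z.of_nat k)) +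
  Series (fun k : nat => f (- Z.of_nat (S k))%Z).

Definition poisson_pmf (lam : R) (z : Z) : R :=
  if (z <? 0)%Z then 0
  else exp (- lam) * lam ^ (Z.to_nat z) / INR (fact (Z.to_nat z)).

(* Skellam(l1,l2) mass: P[X - Y = j] = sum_{k>=0} P[X = k + j] P[Y = k]. *)
Definition skellam_pmf (l1 l2 : R) (j : Z) : R :=
  Series (fun k : nat => poisson_pmf l1 (Z.of_nat k + j)%Z * poisson_pmf l2 (Z.of_nat k)).

(* An algorithm with input domain Z and (discrete) outputs encoded in Z,
   identified with its output probabilities: alg n w = P[M(n) = w]. *)
Definition alg := Z -> Z -> R.

Definition is_dist (p : Z -> R) : Prop :=
  (forall w, 0 <= p w) /\ is_sumZ p 1.

Definition is_alg (M : alg) : Prop := forall n, is_dist (M n).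

(* Post-processing A o M, where A : Z -> Z -> R maps an output t of M
   to a distribution A t on outputs. *)
Definition postproc (A : alg) (M : alg) : alg :=
  fun n u => sumZ (fun t => M n t * A t u).

Definition mixture (t : R) (M1 M2 : alg) : alg :=
  fun n w => t * M1 n w + (1 - t) * M2 n w.

Inductive CNF (Priv : alg -> Prop) : alg -> Prop :=
| CNF_base : forall M, Priv M -> CNF Priv M
| CNF_post : forall A M, is_alg A -> CNF Priv M -> CNF Priv (postproc A M)
| CNF_mix : forall t M1 M2, 0 <= t <= 1 -> CNF Priv M1 -> CNF Priv M2 ->
    CNF Priv (mixture t M1 M2).

Definition rowcone (Priv : alg -> Prop) (x : Z -> R) : Prop :=
  exists (c : R) (M : alg) (w : Z),
    0 <= c /\ CNF Priv M /\ (exists n, 0 < M n w) /\ forall n, x n = c * M n w.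

Definition skellam_mech (l1 l2 : R) : alg :=
  fun n w => skellam_pmf l1 l2 (w - n)%Z.

Definition sgnZ (j : Z) : R := if Z.even j then 1 else -1.

(* Main.v *)
Require Import Defs.
From Stdlib Require Import Reals ZArith Lia Lra Classical.
From Coquelicot Require Import Coquelicot.
Open Scope R_scope.

Lemma ser_cv (a : nat -> R) : ex_series a -> Un_cv (sum_f_R0 a) (Series a).
Proof. intro H. apply Series_correct in H. apply is_series_Reals in H. exact H. Qed.

Lemma ser_partial_le (a : nat -> R) N : (forall n, 0 <= a n) -> ex_series a ->
  sum_f_R0 a N <= Series a.
Proof. intros Hp H. apply sum_incr; auto. apply ser_cv; auto. Qed.

Lemma ser_ge0 (a : nat -> R) : (forall n, 0 <= a n) -> ex_series a -> 0 <= Series a.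
Proof.
  intros Hp H. eapply Rle_trans; [|apply (ser_partial_le a 0); auto]. simpl. auto.
Qed.

Lemma term_le_partial (a : nat -> R) m : (forall n, 0 <= a n) -> a m <= sum_f_R0 a m.
Proof.
  intros Hp. destruct m; simpl. lra.
  pose proof (cond_pos_sum a m Hp). lra.
Qed.

Lemma term_le_ser (a : nat -> R) m : (forall n, 0 <= a n) -> ex_series a -> a m <= Series a.
Proof. intros. eapply Rle_trans. apply term_le_partial; auto. apply ser_partial_le; auto. Qed.

Lemma ser_bounded (a : nat -> R) B : (forall n, 0 <= a n) ->
  (forall N, sum_f_R0 a N <= B) -> ex_series a /\ Series a <= B.
Proof.
  intros Hp HB.
  assert (Hg : Un_growing (sum_f_R0 a)).
  { intro n. simpl. specialize (Hp (S n)). lra. }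
  assert (Hu : has_ub (sum_f_R0 a)).
  { exists B. intros y [n ->]. auto. }
  destruct (growing_cv _ Hg Hu) as [l Hl].
  assert (He : ex_series a).
  { apply ex_series_Reals_1. exists l. exact Hl. }
  split; auto.
  apply (Rle_cv_lim (Un := sum_f_R0 a) (Vn := fun _ => B)); auto.
  apply ser_cv; auto.
  intros e He'. exists O. intros. unfold Rdist. rewrite Rminus_diag, Rabs_R0. lra.
Qed.

Lemma exs_le (a b : nat -> R) : (forall n, Rabs (a n) <= b n) -> ex_series b -> ex_series a.
Proof. intros. apply (ex_series_le (V:=R_CompleteNormedModule)) with b; auto. Qed.

Lemma exs_scal (c : R) (a : nat -> R) : ex_series a -> ex_series (fun n => c * a n).
Proof. intros. apply (ex_series_scal_l (V:=R_NormedModule) c a); auto. Qed.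

Lemma exs_plus (a b : nat -> R) : ex_series a -> ex_series b -> ex_series (fun n => a n + b n).
Proof. intros. apply (ex_series_plus (V:=R_NormedModule)); auto. Qed.

Lemma ser_sum_exch (a : nat -> nat -> R) M :
  (forall m, ex_series (fun n => a n m)) ->
  Series (fun n => sum_f_R0 (fun m => a n m) M) = sum_f_R0 (fun m => Series (fun n => a n m)) M.
Proof.
  intros H. induction M; simpl.
  - reflexivity.
  - rewrite Series_plus; auto. rewrite IHM; auto.
    clear IHM. induction M; simpl. auto.
    apply (ex_series_plus (V:=R_NormedModule)); auto.
Qed.

Lemma tonelli_half (a : nat -> nat -> R) : (forall n m, 0 <= a n m) ->
  (forall n, ex_series (a n)) -> ex_series (fun n => Series (a n)) ->
  (forall m, ex_series (fun n => a n m)) /\ ex_series (fun m => Series (fun n => a n m)) /\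
  Series (fun m => Series (fun n => a n m)) <= Series (fun n => Series (a n)).
Proof.
  intros Hp Hr Hs.
  assert (Hc : forall m, ex_series (fun n => a n m)).
  { intro m. apply (proj1 (ser_bounded _ (Series (fun n => Series (a n))) (fun n => Hp n m) ltac:(
      intro N; eapply Rle_trans; [apply sum_growing; intro n; apply (term_le_ser (a n) m); auto|];
      apply ser_partial_le; auto; intro; apply ser_ge0; auto))). }
  assert (Hb : forall M, sum_f_R0 (fun m => Series (fun n => a n m)) M <= Series (fun n => Series (a n))).
  { intro M. rewrite <- ser_sum_exch; auto. apply Series_le; auto.
    intro n. split. apply cond_pos_sum. auto. apply ser_partial_le; auto. }
  destruct (ser_bounded _ _ (fun m => ser_ge0 _ (fun n => Hp n m) (Hc m)) Hb) as [E L].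
  auto.
Qed.

Lemma tonelli (a : nat -> nat -> R) : (forall n m, 0 <= a n m) ->
  (forall n, ex_series (a n)) -> ex_series (fun n => Series (a n)) ->
  (forall m, ex_series (fun n => a n m)) /\ ex_series (fun m => Series (fun n => a n m)) /\
  Series (fun m => Series (fun n => a n m)) = Series (fun n => Series (a n)).
Proof.
  intros Hp Hr Hs.
  destruct (tonelli_half a Hp Hr Hs) as [Hc [Hcs L1]].
  destruct (tonelli_half (fun m n => a n m) (fun m n => Hp n m) Hc Hcs) as [_ [_ L2]].
  split; [auto|split; [auto|]]. apply Rle_antisym; auto.
Qed.

Lemma fubini (a Mj : nat -> nat -> R) : (forall n m, Rabs (a n m) <= Mj n m) ->
  (forall n, ex_series (Mj n)) -> ex_series (fun n => Series (Mj n)) ->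
  Series (fun n => Series (a n)) = Series (fun m => Series (fun n => a n m)).
Proof.
  intros HM Hr Hs.
  assert (Hp : forall n m, 0 <= Mj n m). { intros. eapply Rle_trans; [apply Rabs_pos|apply HM]. }
  set (Q := fun n m => Mj n m + a n m).
  assert (HQ : forall n m, 0 <= Q n m <= 2 * Mj n m).
  { intros. unfold Q. specialize (HM n m). apply Rabs_le_between in HM. lra. }
  assert (HQr : forall n, ex_series (Q n)).
  { intro n. apply exs_le with (fun m => 2 * Mj n m).
    intro m. rewrite (Rabs_pos_eq (Q n m)) by apply HQ. apply HQ.
    apply exs_scal; auto. }
  assert (HQs : ex_series (fun n => Series (Q n))).
  { apply exs_le with (fun n => 2 * Series (Mj n)).
    intro n. rewrite Rabs_pos_eq.
    rewrite <- Series_scal_l. apply Series_le. intro; apply HQ.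
    apply exs_scal; auto.
    apply ser_ge0. intro; apply HQ. auto.
    apply exs_scal; auto. }
  destruct (tonelli Q ltac:(intros; apply HQ) HQr HQs) as [HQc [HQcs EQ]].
  destruct (tonelli Mj Hp Hr Hs) as [HMc [HMcs EM]].
  transitivity (Series (fun n => Series (Q n) - Series (Mj n))).
  { apply Series_ext. intro n. rewrite <- Series_minus; auto. apply Series_ext. intro; unfold Q; ring. }
  rewrite Series_minus; auto.
  transitivity (Series (fun m => Series (fun n => Q n m) - Series (fun n => Mj n m))).
  2:{ apply Series_ext. intro m. rewrite <- Series_minus; auto. apply Series_ext. intro; unfold Q; ring. }
  rewrite Series_minus; auto. rewrite EQ, EM. reflexivity.
Qed.

Lemma exs_ext (a b : nat -> R) : (forall n, a n = b n) -> ex_series a -> ex_series b.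
Proof. intros. apply (ex_series_ext (V:=R_NormedModule) a b); auto. Qed.

Lemma ev_zero_sum (a : nat -> R) N : (forall k, (N < k)%nat -> a k = 0) ->
  forall n, (N <= n)%nat -> sum_f_R0 a n = sum_f_R0 a N.
Proof.
  intros H n Hn. induction n.
  - assert (N = 0)%nat by lia. subst. reflexivity.
  - destruct (Nat.eq_dec N (S n)) as [->|Hne]. reflexivity.
    simpl. rewrite IHn by lia. rewrite H by lia. ring.
Qed.

Lemma ev_zero_is (a : nat -> R) N : (forall k, (N < k)%nat -> a k = 0) ->
  is_series a (sum_f_R0 a N).
Proof.
  intros H. apply is_series_Reals. intros e He. exists N. intros n Hn.
  rewrite (ev_zero_sum a N H n Hn). unfold Rdist. replace (_ - _) with 0 by ring. rewrite Rabs_R0. lra.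
Qed.

Lemma ev_zero_ex (a : nat -> R) N : (forall k, (N < k)%nat -> a k = 0) -> ex_series a.
Proof. intros H. eexists. apply (ev_zero_is a N); auto. Qed.

Lemma ev_zero_ser (a : nat -> R) N : (forall k, (N < k)%nat -> a k = 0) ->
  Series a = sum_f_R0 a N.
Proof. intros H. apply is_series_unique. apply ev_zero_is; auto. Qed.

Lemma exs_zero : ex_series (fun _ : nat => 0).
Proof. apply (ev_zero_ex _ O). auto. Qed.

Lemma ser_abs_le (a w : nat -> R) : (forall n, Rabs (a n) <= w n) -> ex_series w ->
  Rabs (Series a) <= Series w.
Proof.
  intros H Hw. eapply Rle_trans. apply Series_Rabs.
  apply exs_le with w; auto. intro; rewrite Rabs_Rabsolu; auto.
  apply Series_le; auto. intro; split; auto. apply Rabs_pos.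
Qed.

Lemma dom_rows (a Mj : nat -> nat -> R) : (forall n m, Rabs (a n m) <= Mj n m) ->
  (forall n, ex_series (Mj n)) -> ex_series (fun n => Series (Mj n)) ->
  (forall n, ex_series (a n)) /\ ex_series (fun n => Series (a n)).
Proof.
  intros HM Hr Hs. split.
  - intro n. apply exs_le with (Mj n); auto.
  - apply exs_le with (fun n => Series (Mj n)); auto. intro n. apply ser_abs_le; auto.
Qed.

Definition pp (l : R) (n : nat) : R := exp (- l) * l ^ n / INR (fact n).

Lemma pp_is (l : R) : is_series (pp l) 1.
Proof.
  pose proof (is_exp_Reals l) as H. unfold is_pseries in H.
  apply (is_series_scal_l (V:=R_NormedModule) (exp (-l))) in H.
  replace 1 with (scal (exp (-l)) (exp l)).
  eapply is_series_ext; [|exact H]. intro n. unfold pp. simpl.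
  change scal with Rmult. rewrite pow_n_pow. unfold Rdiv. ring.
  change scal with Rmult. rewrite <- exp_plus. replace (-l + l) with 0 by ring. apply exp_0.
Qed.

Lemma pp_ex l : ex_series (pp l).
Proof. eexists. apply pp_is. Qed.

Lemma pp_ser l : Series (pp l) = 1.
Proof. apply is_series_unique, pp_is. Qed.

Lemma pp_ge0 l n : 0 <= l -> 0 <= pp l n.
Proof.
  intros. unfold pp. apply Rmult_le_pos. apply Rmult_le_pos. left; apply exp_pos.
  apply pow_le; auto. left. apply Rinv_0_lt_compat. apply INR_fact_lt_0.
Qed.

Lemma pp_le1 l n : 0 <= l -> pp l n <= 1.
Proof. intros. rewrite <- (pp_ser l). apply term_le_ser. intro; apply pp_ge0; auto. apply pp_ex. Qed.

Lemma pp_shift_ex l b : ex_series (fun j => pp l (b + j)).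
Proof. apply (ex_series_incr_n (V:=R_NormedModule) (pp l) b). apply pp_ex. Qed.

Lemma pp_shift_le l b : 0 <= l -> Series (fun j => pp l (b + j)) <= 1.
Proof.
  intros Hl. rewrite <- (pp_ser l).
  transitivity (Series (fun a => if (b <=? a)%nat then pp l a else 0)).
  - right. rewrite (Series_incr_n_aux (fun a => if (b <=? a)%nat then pp l a else 0) b).
    + apply Series_ext. intro n. destruct (Nat.leb_spec b (b + n)); auto; exfalso; lia.
    + intros k Hk. destruct (Nat.leb_spec b k); auto; exfalso; lia.
  - apply Series_le. intro n. pose proof (pp_ge0 l n Hl). destruct (b <=? n)%nat; lra.
    apply pp_ex.
Qed.

Lemma fubini_prod (a : nat -> nat -> R) (Bd : R) (u v : nat -> R) : 0 <= Bd ->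
  (forall n, 0 <= u n) -> (forall m, 0 <= v m) -> ex_series u -> ex_series v ->
  (forall n m, Rabs (a n m) <= Bd * u n * v m) ->
  Series (fun n => Series (a n)) = Series (fun m => Series (fun n => a n m)).
Proof.
  intros HB Hu Hv Eu Ev H. apply fubini with (fun n m => Bd * u n * v m); auto.
  - intro n. apply exs_scal; auto.
  - apply exs_ext with (fun n => Series v * Bd * u n).
    intro n. rewrite Series_scal_l. ring. apply exs_scal; auto.
Qed.

Lemma dom_prod (a : nat -> nat -> R) (Bd : R) (u v : nat -> R) : 0 <= Bd ->
  (forall n, 0 <= u n) -> (forall m, 0 <= v m) -> ex_series u -> ex_series v ->
  (forall n m, Rabs (a n m) <= Bd * u n * v m) ->
  (forall n, ex_series (a n)) /\ ex_series (fun n => Series (a n)).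
Proof.
  intros HB Hu Hv Eu Ev H. apply dom_rows with (fun n m => Bd * u n * v m); auto.
  - intro n. apply exs_scal; auto.
  - apply exs_ext with (fun n => Series v * Bd * u n).
    intro n. rewrite Series_scal_l. ring. apply exs_scal; auto.
Qed.

Lemma pow_m1_abs k : Rabs ((-1) ^ k) = 1.
Proof. rewrite <- RPow_abs. rewrite Rabs_m1. apply pow1. Qed.

Lemma pp_binom l c s : (c <= s)%nat ->
  pp l c * pp l (s - c) = (exp (-l) * exp (-l) * l ^ s / INR (fact s)) * Binomial.C s c.
Proof.
  intros H. unfold pp, Binomial.C.
  replace (l ^ s) with (l ^ c * l ^ (s - c)) by (rewrite <- pow_add; f_equal; lia).
  pose proof (INR_fact_neq_0 c). pose proof (INR_fact_neq_0 (s - c)).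
  pose proof (INR_fact_neq_0 s). field. auto.
Qed.

Lemma cauchy_alt l Bd (G : nat -> R) : 0 <= l -> (forall s, Rabs (G s) <= Bd) ->
  Series (fun c => pp l c * Series (fun a => (-1) ^ a * pp l a * G (c + a)%nat))
  = exp (-l) * exp (-l) * G O.
Proof.
  intros Hl HG.
  assert (HB : 0 <= Bd). { eapply Rle_trans; [apply Rabs_pos|apply (HG O)]. }
  set (E := fun c s => if (c <=? s)%nat then pp l c * ((-1) ^ (s - c) * pp l (s - c) * G s) else 0).
  transitivity (Series (fun c => Series (E c))).
  { apply Series_ext. intro c. rewrite <- Series_scal_l.
    rewrite (Series_incr_n_aux (E c) c).
    - apply Series_ext. intro k. unfold E. destruct (Nat.leb_spec c (c + k)); [|exfalso; lia].
      replace (c + k - c)%nat with k by lia. reflexivity.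
    - intros k Hk. unfold E. destruct (Nat.leb_spec c k); auto; exfalso; lia. }
  set (Mj := fun c s => if (c <=? s)%nat then Bd * pp l c * pp l (s - c) else 0).
  assert (HMr : forall c, ex_series (Mj c)).
  { intro c. apply (ex_series_incr_n (V:=R_NormedModule) (Mj c) c).
    apply exs_ext with (fun k => (Bd * pp l c) * pp l k).
    intro k. unfold Mj. destruct (Nat.leb_spec c (c + k)); [|exfalso; lia].
    replace (c + k - c)%nat with k by lia. reflexivity.
    apply exs_scal, pp_ex. }
  assert (HMs : forall c, Series (Mj c) = Bd * pp l c).
  { intro c. rewrite (Series_incr_n_aux (Mj c) c).
    - rewrite (Series_ext _ (fun k => (Bd * pp l c) * pp l k)).
      rewrite Series_scal_l, pp_ser. ring.
      intro k. unfold Mj. destruct (Nat.leb_spec c (c + k)); [|exfalso; lia].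
      replace (c + k - c)%nat with k by lia. reflexivity.
    - intros k Hk. unfold Mj. destruct (Nat.leb_spec c k); auto; exfalso; lia. }
  rewrite (fubini E Mj); auto.
  3:{ apply exs_ext with (fun c => Bd * pp l c). intro; rewrite HMs; auto.
      apply exs_scal, pp_ex. }
  2:{ intros c s. unfold E, Mj. destruct (c <=? s)%nat.
      - rewrite !Rabs_mult, pow_m1_abs, (Rabs_pos_eq (pp l c)), (Rabs_pos_eq (pp l (s - c))) by (apply pp_ge0; auto).
        pose proof (HG s). pose proof (pp_ge0 l c Hl). pose proof (pp_ge0 l (s - c) Hl).
        rewrite Rmult_1_l.
        replace (Bd * pp l c * pp l (s - c)) with (pp l c * (pp l (s - c) * Bd)) by ring.
        apply Rmult_le_compat_l; auto. apply Rmult_le_compat_l; auto.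
      - rewrite Rabs_R0. lra. }
  transitivity (Series (fun s => (G s * (exp (-l) * exp (-l) * l ^ s / INR (fact s))) * (1 + -1) ^ s)).
  { apply Series_ext. intro s. rewrite (ev_zero_ser _ s).
    2:{ intros k Hk. unfold E. destruct (Nat.leb_spec k s); auto; exfalso; lia. }
    rewrite binomial.
    rewrite scal_sum. apply sum_eq. intros c Hc. unfold E.
    destruct (Nat.leb_spec c s); [|exfalso; lia].
    rewrite pow1. 
    replace (pp l c * ((-1) ^ (s - c) * pp l (s - c) * G s)) with ((pp l c * pp l (s - c)) * ((-1) ^ (s - c) * G s)) by ring.
    rewrite pp_binom by auto. ring. }
  rewrite (ev_zero_ser _ 0). simpl. field.
  intros k Hk. replace (1 + -1) with 0 by ring. rewrite pow_i by lia. ring.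
Qed.

Lemma pois_nat l n : poisson_pmf l (Z.of_nat n) = pp l n.
Proof.
  unfold poisson_pmf, pp. destruct (Z.ltb_spec (Z.of_nat n) 0). lia.
  rewrite Nat2Z.id. reflexivity.
Qed.

Lemma pois_neg l z : (z < 0)%Z -> poisson_pmf l z = 0.
Proof. intros H. unfold poisson_pmf. destruct (Z.ltb_spec z 0); auto; lia. Qed.

Lemma sumZ_ext (u v : Z -> R) : (forall t, u t = v t) -> sumZ u = sumZ v.
Proof. intros H. unfold sumZ. f_equal; apply Series_ext; auto. Qed.

Lemma fpos l1 l2 j : skellam_pmf l1 l2 (Z.of_nat j) = Series (fun b => pp l1 (b + j) * pp l2 b).
Proof.
  unfold skellam_pmf. apply Series_ext. intro k.
  rewrite <- Nat2Z.inj_add, !pois_nat. reflexivity.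
Qed.

Lemma fneg l1 l2 i : skellam_pmf l1 l2 (- Z.of_nat (S i))%Z = Series (fun a => pp l1 a * pp l2 (S i + a)).
Proof.
  unfold skellam_pmf. rewrite (Series_incr_n_aux _ (S i)).
  - apply Series_ext. intro k.
    replace (Z.of_nat (S i + k) + - Z.of_nat (S i))%Z with (Z.of_nat k) by lia.
    rewrite !pois_nat. reflexivity.
  - intros k Hk. rewrite pois_neg by lia. ring.
Qed.

Lemma fubini_dom2 (a : nat -> nat -> R) Bd (u : nat -> R) (w : nat -> nat -> R) :
  0 <= Bd -> (forall n, 0 <= u n) -> ex_series u -> (forall n, ex_series (w n)) ->
  (forall n m, 0 <= w n m) -> (forall n, Series (w n) <= 1) ->
  (forall n m, Rabs (a n m) <= Bd * u n * w n m) ->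
  Series (fun n => Series (a n)) = Series (fun m => Series (fun n => a n m)).
Proof.
  intros HB Hu Eu Ew Hw Sw H. apply fubini with (fun n m => Bd * u n * w n m); auto.
  - intro n. apply exs_scal; auto.
  - apply exs_le with (fun n => Bd * u n).
    + intro n. rewrite Series_scal_l. rewrite Rabs_pos_eq.
      rewrite <- (Rmult_1_r (Bd * u n)) at 2. apply Rmult_le_compat_l; auto.
      apply Rmult_le_pos; auto.
      apply Rmult_le_pos; [apply Rmult_le_pos; auto|]. apply ser_ge0; auto.
    + apply exs_scal; auto.
Qed.

Lemma tonelli_dom2 (a : nat -> nat -> R) (u : nat -> R) (w : nat -> nat -> R) :
  (forall n, 0 <= u n) -> ex_series u -> (forall n, ex_series (w n)) ->
  (forall n m, 0 <= w n m) -> (forall n, Series (w n) <= 1) ->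
  (forall n m, a n m = u n * w n m) ->
  ex_series (fun m => Series (fun n => a n m)).
Proof.
  intros Hu Eu Ew Hw Sw H.
  assert (Hp : forall n m, 0 <= a n m). { intros; rewrite H; apply Rmult_le_pos; auto. }
  assert (Hr : forall n, ex_series (a n)).
  { intro n. apply exs_ext with (fun m => u n * w n m). intro; auto. apply exs_scal; auto. }
  refine (proj1 (proj2 (tonelli a Hp Hr _))).
  apply exs_le with u; auto. intro n. rewrite Rabs_pos_eq by (apply ser_ge0; auto).
  rewrite (Series_ext _ (fun m => u n * w n m)) by auto. rewrite Series_scal_l.
  rewrite <- (Rmult_1_r (u n)) at 2. apply Rmult_le_compat_l; auto.
Qed.

Lemma fpos_ex l1 l2 : 0 <= l1 -> 0 <= l2 -> ex_series (fun j => skellam_pmf l1 l2 (Z.of_nat j)).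
Proof.
  intros H1 H2. apply exs_ext with (fun j => Series (fun b => pp l1 (b + j) * pp l2 b)).
  intro; rewrite fpos; auto.
  apply (tonelli_dom2 _ (pp l2) (fun b j => pp l1 (b + j))); auto using pp_ge0, pp_ex, pp_shift_ex, pp_shift_le.
  intros; ring.
Qed.

Lemma fneg_ex l1 l2 : 0 <= l1 -> 0 <= l2 -> ex_series (fun i => skellam_pmf l1 l2 (- Z.of_nat (S i))%Z).
Proof.
  intros H1 H2. apply exs_ext with (fun i => Series (fun a => pp l1 a * pp l2 (S a + i))).
  intro; rewrite fneg; auto. apply Series_ext. intro. f_equal. f_equal. lia.
  apply (tonelli_dom2 _ (pp l1) (fun a i => pp l2 (S a + i))); auto using pp_ge0, pp_ex, pp_shift_ex, pp_shift_le.
Qed.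

Lemma lemF l1 l2 (g : Z -> R) Bd : 0 <= l1 -> 0 <= l2 -> (forall z, Rabs (g z) <= Bd) ->
  sumZ (fun j => skellam_pmf l1 l2 j * g j) =
  Series (fun a => pp l1 a * Series (fun b => pp l2 b * g (Z.of_nat a - Z.of_nat b)%Z)).
Proof.
  intros H1 H2 Hg.
  assert (HB : 0 <= Bd). { eapply Rle_trans; [apply Rabs_pos|apply (Hg 0%Z)]. }
  set (h := fun a b => pp l1 a * (pp l2 b * g (Z.of_nat a - Z.of_nat b)%Z)).
  assert (Hh : forall a b, Rabs (h a b) <= Bd * pp l1 a * pp l2 b).
  { intros a b. unfold h. rewrite !Rabs_mult, !(Rabs_pos_eq (pp _ _)) by (apply pp_ge0; auto).
    pose proof (Hg (Z.of_nat a - Z.of_nat b)%Z). pose proof (pp_ge0 l1 a H1). pose proof (pp_ge0 l2 b H2).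
    replace (Bd * pp l1 a * pp l2 b) with (pp l1 a * (pp l2 b * Bd)) by ring.
    apply Rmult_le_compat_l; auto. apply Rmult_le_compat_l; auto. }
  transitivity (Series (fun a => Series (h a))).
  2:{ apply Series_ext. intro a. rewrite <- Series_scal_l. reflexivity. }
  rewrite (fubini_prod h Bd (pp l1) (pp l2)); auto using pp_ge0, pp_ex.
  set (E1 := fun a b => if (b <=? a)%nat then h a b else 0).
  set (E2 := fun a b => if (b <=? a)%nat then 0 else h a b).
  assert (HE1 : forall b a, Rabs (E1 a b) <= Bd * pp l2 b * pp l1 a).
  { intros. unfold E1. destruct (b <=? a)%nat. rewrite Hh; right; ring. rewrite Rabs_R0.
    apply Rmult_le_pos; [apply Rmult_le_pos|]; auto using pp_ge0. }
  assert (HE2 : forall b a, Rabs (E2 a b) <= Bd * pp l2 b * pp l1 a).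
  { intros. unfold E2. destruct (b <=? a)%nat. rewrite Rabs_R0.
    apply Rmult_le_pos; [apply Rmult_le_pos|]; auto using pp_ge0. rewrite Hh; right; ring. }
  destruct (dom_prod (fun b a => E1 a b) Bd (pp l2) (pp l1)) as [R1 S1]; auto using pp_ge0, pp_ex.
  destruct (dom_prod (fun b a => E2 a b) Bd (pp l2) (pp l1)) as [R2 S2]; auto using pp_ge0, pp_ex.
  transitivity (Series (fun b => Series (fun a => E1 a b) + Series (fun a => E2 a b))).
  2:{ apply Series_ext. intro b. rewrite <- Series_plus; auto. apply Series_ext. intro a.
      unfold E1, E2. destruct (b <=? a)%nat; ring. }
  rewrite Series_plus; auto.
  unfold sumZ. f_equal.
  -
    transitivity (Series (fun b => Series (fun j => h (b + j)%nat b))).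
    2:{ apply Series_ext. intro b. rewrite (Series_incr_n_aux (fun a => E1 a b) b).
        - apply Series_ext. intro j. unfold E1. destruct (Nat.leb_spec b (b + j)); auto; exfalso; lia.
        - intros k Hk. unfold E1. destruct (Nat.leb_spec b k); auto; exfalso; lia. }
    rewrite (fubini_dom2 (fun b j => h (b + j)%nat b) Bd (pp l2) (fun b j => pp l1 (b + j))); auto using pp_ge0, pp_ex, pp_shift_ex, pp_shift_le.
    2:{ intros b j. rewrite Hh. right; ring. }
    apply Series_ext. intro j. rewrite fpos. rewrite <- Series_scal_r. apply Series_ext. intro b.
    unfold h. replace (Z.of_nat (b + j) - Z.of_nat b)%Z with (Z.of_nat j) by lia. ring.
  -
    rewrite (fubini_prod (fun b a => E2 a b) Bd (pp l2) (pp l1)); auto using pp_ge0, pp_ex.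
    transitivity (Series (fun a => Series (fun i => h a (S a + i)%nat))).
    2:{ apply Series_ext. intro a. rewrite (Series_incr_n_aux (fun b => E2 a b) (S a)).
        - apply Series_ext. intro i. unfold E2. destruct (Nat.leb_spec (S a + i) a); auto; exfalso; lia.
        - intros k Hk. unfold E2. destruct (Nat.leb_spec k a); auto; exfalso; lia. }
    rewrite (fubini_dom2 (fun a i => h a (S a + i)%nat) Bd (pp l1) (fun a i => pp l2 (S a + i))); auto using pp_ge0, pp_ex, pp_shift_ex, pp_shift_le.
    apply Series_ext. intro i. rewrite fneg. rewrite <- Series_scal_r. apply Series_ext. intro a.
    unfold h. replace (Z.of_nat a - Z.of_nat (S a + i))%Z with (- Z.of_nat (S i))%Z by lia.
    replace (S a + i)%nat with (S i + a)%nat by lia. ring.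
Qed.

Definition halves_ex (v : Z -> R) :=
  ex_series (fun k => v (Z.of_nat k)) /\ ex_series (fun k => v (- Z.of_nat (S k))%Z).

Lemma halves_ext u v : (forall t, u t = v t) -> halves_ex u -> halves_ex v.
Proof. intros H [A1 A2]. split. apply exs_ext with (2:=A1); intro; auto. apply exs_ext with (2:=A2); intro; auto. Qed.

Lemma shift_p1 v : halves_ex v -> halves_ex (fun t => v (t + 1)%Z) /\ sumZ (fun t => v (t + 1)%Z) = sumZ v.
Proof.
  intros [A1 A2].
  assert (P1 : ex_series (fun k => v (Z.of_nat k + 1)%Z)).
  { apply (proj1 (ex_series_incr_1 (V:=R_NormedModule) (fun k => v (Z.of_nat k)))) in A1. eapply exs_ext; [|exact A1].
    intro k; cbv beta; f_equal; lia. }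
  assert (P2 : ex_series (fun k => v (- Z.of_nat (S k) + 1)%Z)).
  { apply (proj2 (ex_series_incr_1 (V:=R_NormedModule) (fun k => v (- Z.of_nat (S k) + 1)%Z))). eapply exs_ext; [|exact A2].
    intro k; cbv beta; f_equal; lia. }
  split. split; auto.
  unfold sumZ. rewrite (Series_incr_1 (fun k => v (Z.of_nat k))) by auto.
  rewrite (Series_incr_1 (fun k => v (- Z.of_nat (S k) + 1)%Z)) by auto.
  rewrite (Series_ext (fun k => v (Z.of_nat k + 1)%Z) (fun k => v (Z.of_nat (S k)))).
  rewrite (Series_ext (fun k => v (- Z.of_nat (S (S k)) + 1)%Z) (fun k => v (- Z.of_nat (S k))%Z)).
  replace (- Z.of_nat 1 + 1)%Z with 0%Z by lia. simpl. ring.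
  intro; cbv beta; f_equal; lia. intro; cbv beta; f_equal; lia.
Qed.

Lemma shift_m1 v : halves_ex v -> halves_ex (fun t => v (t - 1)%Z) /\ sumZ (fun t => v (t - 1)%Z) = sumZ v.
Proof.
  intros [A1 A2].
  assert (P1 : ex_series (fun k => v (Z.of_nat k - 1)%Z)).
  { apply (proj2 (ex_series_incr_1 (V:=R_NormedModule) (fun k => v (Z.of_nat k - 1)%Z))). eapply exs_ext; [|exact A1].
    intro k; cbv beta; f_equal; lia. }
  assert (P2 : ex_series (fun k => v (- Z.of_nat (S k) - 1)%Z)).
  { apply (proj1 (ex_series_incr_1 (V:=R_NormedModule) (fun k => v (- Z.of_nat (S k))%Z))) in A2. eapply exs_ext; [|exact A2].
    intro k; cbv beta; f_equal; lia. }
  split. split; auto.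
  unfold sumZ. rewrite (Series_incr_1 (fun k => v (Z.of_nat k - 1)%Z)) by auto.
  rewrite (Series_incr_1 (fun k => v (- Z.of_nat (S k))%Z)) by auto.
  rewrite (Series_ext (fun k => v (Z.of_nat (S k) - 1)%Z) (fun k => v (Z.of_nat k))).
  rewrite (Series_ext (fun k => v (- Z.of_nat (S (S k)))%Z) (fun k => v (- Z.of_nat (S k) - 1)%Z)).
  replace (Z.of_nat 0 - 1)%Z with (- Z.of_nat 1)%Z by lia. ring.
  intro; cbv beta; f_equal; lia. intro; cbv beta; f_equal; lia.
Qed.

Lemma shift_all (n : Z) : forall v, halves_ex v ->
  halves_ex (fun t => v (t + n)%Z) /\ sumZ (fun t => v (t + n)%Z) = sumZ v.
Proof.
  induction n using Z.peano_ind; intros v Hv.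
  - split. eapply halves_ext; [|exact Hv]. intro; cbv beta; f_equal; lia.
    apply sumZ_ext. intro; cbv beta; f_equal; lia.
  - destruct (IHn v Hv) as [Hw Ew].
    destruct (shift_p1 _ Hw) as [Hw' Ew'].
    split. eapply halves_ext; [|exact Hw']. intro; simpl; f_equal; lia.
    rewrite <- Ew, <- Ew'. apply sumZ_ext. intro; cbv beta; f_equal; lia.
  - destruct (IHn v Hv) as [Hw Ew].
    destruct (shift_m1 _ Hw) as [Hw' Ew'].
    split. eapply halves_ext; [|exact Hw']. intro; simpl; f_equal; lia.
    rewrite <- Ew, <- Ew'. apply sumZ_ext. intro; cbv beta; f_equal; lia.
Qed.

Lemma sgn_nat a : sgnZ (Z.of_nat a) = (-1) ^ a.
Proof.
  induction a. reflexivity.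
  rewrite Nat2Z.inj_succ. unfold sgnZ in *. rewrite Z.even_succ, <- Z.negb_even.
  simpl. destruct (Z.even (Z.of_nat a)); simpl; rewrite <- IHa; ring.
Qed.

Lemma sgn_sub a b : sgnZ (Z.of_nat a - Z.of_nat b) = (-1) ^ a * (-1) ^ b.
Proof.
  rewrite <- !sgn_nat. unfold sgnZ. rewrite Z.even_sub.
  destruct (Z.even (Z.of_nat a)), (Z.even (Z.of_nat b)); simpl; ring.
Qed.

Lemma sgn_abs j : Rabs (sgnZ j) = 1.
Proof. unfold sgnZ. destruct (Z.even j). apply Rabs_R1. apply Rabs_m1. Qed.

Lemma pp_bound l (F : nat -> R) Bd : 0 <= l -> (forall a, Rabs (F a) <= Bd) ->
  Rabs (Series (fun a => pp l a * F a)) <= Bd.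
Proof.
  intros Hl H. assert (HB : 0 <= Bd). { eapply Rle_trans; [apply Rabs_pos|apply (H O)]. }
  eapply Rle_trans. apply ser_abs_le with (w := fun a => Bd * pp l a).
  intro a. rewrite Rabs_mult, Rabs_pos_eq by (apply pp_ge0; auto).
  pose proof (pp_ge0 l a Hl). pose proof (H a). pose proof (Rabs_pos (F a)). nra.
  apply exs_scal, pp_ex. rewrite Series_scal_l, pp_ser. lra.
Qed.

Lemma pp_ex_mul l (F : nat -> R) Bd : 0 <= l -> (forall a, Rabs (F a) <= Bd) ->
  ex_series (fun a => pp l a * F a).
Proof.
  intros Hl H. apply exs_le with (fun a => Bd * pp l a).
  intro a. rewrite Rabs_mult, Rabs_pos_eq by (apply pp_ge0; auto).
  pose proof (pp_ge0 l a Hl). pose proof (H a). pose proof (Rabs_pos (F a)). nra.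
  apply exs_scal, pp_ex.
Qed.

Lemma pp_nonneg l (F : nat -> R) Bd : 0 <= l -> (forall a, 0 <= F a <= Bd) ->
  0 <= Series (fun a => pp l a * F a).
Proof.
  intros Hl H. apply ser_ge0. intro; apply Rmult_le_pos; [apply pp_ge0; auto|apply H].
  apply pp_ex_mul with Bd; auto. intro a. rewrite Rabs_pos_eq; apply H.
Qed.

Lemma f_ge0 l1 l2 j : 0 <= l1 -> 0 <= l2 -> 0 <= skellam_pmf l1 l2 j.
Proof.
  intros H1 H2. destruct (Z_lt_le_dec j 0).
  - replace j with (- Z.of_nat (S (Z.to_nat (- j - 1))))%Z by lia. rewrite fneg.
    apply pp_nonneg with 1; auto. intro; split. apply pp_ge0; auto. apply pp_le1; auto.
  - replace j with (Z.of_nat (Z.to_nat j)) by lia. rewrite fpos.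
    rewrite (Series_ext _ (fun b => pp l2 b * pp l1 (b + Z.to_nat j))) by (intro; ring).
    apply pp_nonneg with 1; auto. intro; split. apply pp_ge0; auto. apply pp_le1; auto.
Qed.

Definition Tf l1 l2 (x : Z -> R) (t : Z) : R :=
  Series (fun a => pp l1 a * Series (fun b => pp l2 b *
     (sgnZ (Z.of_nat a - Z.of_nat b) * x (t + (Z.of_nat a - Z.of_nat b))%Z))).

Lemma main_id l1 l2 (x : Z -> R) Bx n : 0 <= l1 -> 0 <= l2 -> (forall k, Rabs (x k) <= Bx) ->
  Series (fun c => pp l1 c * Series (fun d => pp l2 d * Tf l1 l2 x (n + (Z.of_nat c - Z.of_nat d))%Z))
  = exp (-l1) * exp (-l1) * (exp (-l2) * exp (-l2) * x n).
Proof.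
  intros H1 H2 Hx.
  assert (HB : 0 <= Bx). { eapply Rle_trans; [apply Rabs_pos|apply (Hx 0%Z)]. }
  set (W := fun c d a => Series (fun b => (-1) ^ b * pp l2 b * x (n + Z.of_nat (c + a) - Z.of_nat (d + b))%Z)).
  assert (HW : forall c d a, Rabs (W c d a) <= Bx).
  { intros. unfold W. rewrite (Series_ext _ (fun b => pp l2 b * ((-1) ^ b * x (n + Z.of_nat (c + a) - Z.of_nat (d + b))%Z))) by (intro; ring).
    apply pp_bound; auto. intro b. rewrite Rabs_mult, pow_m1_abs, Rmult_1_l. auto. }
  assert (HT : forall c d, Tf l1 l2 x (n + (Z.of_nat c - Z.of_nat d))%Z = Series (fun a => (-1) ^ a * pp l1 a * W c d a)).
  { intros c d. unfold Tf, W. apply Series_ext. intro a.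
    rewrite <- !Series_scal_l. apply Series_ext. intro b. rewrite sgn_sub.
    replace (n + (Z.of_nat c - Z.of_nat d) + (Z.of_nat a - Z.of_nat b))%Z with (n + Z.of_nat (c + a) - Z.of_nat (d + b))%Z by lia.
    ring. }
  transitivity (Series (fun c => pp l1 c * Series (fun a => (-1) ^ a * pp l1 a *
                 (exp (-l2) * exp (-l2) * x (n + Z.of_nat (c + a))%Z)))).
  - apply Series_ext. intro c. f_equal.
    transitivity (Series (fun d => Series (fun a => pp l2 d * ((-1) ^ a * pp l1 a * W c d a)))).
    { apply Series_ext. intro d. rewrite HT. rewrite Series_scal_l. reflexivity. }
    rewrite (fubini_prod _ Bx (pp l2) (pp l1)); auto using pp_ge0, pp_ex.
    2:{ intros d a. rewrite !Rabs_mult, pow_m1_abs, !Rabs_pos_eq by (apply pp_ge0; auto).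
        pose proof (HW c d a). pose proof (pp_ge0 l2 d H2). pose proof (pp_ge0 l1 a H1).
        pose proof (Rabs_pos (W c d a)).
        replace (Bx * pp l2 d * pp l1 a) with ((pp l2 d * pp l1 a) * Bx) by ring.
        replace (pp l2 d * (1 * pp l1 a * Rabs (W c d a))) with ((pp l2 d * pp l1 a) * Rabs (W c d a)) by ring.
        apply Rmult_le_compat_l; auto. apply Rmult_le_pos; auto. }
    apply Series_ext. intro a.
    rewrite (Series_ext _ (fun d => ((-1) ^ a * pp l1 a) * (pp l2 d * W c d a))) by (intro; ring).
    rewrite Series_scal_l. f_equal.
    unfold W.
    rewrite (cauchy_alt l2 Bx (fun s => x (n + Z.of_nat (c + a) - Z.of_nat s)%Z)); auto.
    replace (n + Z.of_nat (c + a) - Z.of_nat 0)%Z with (n + Z.of_nat (c + a))%Z by lia. reflexivity.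
  - rewrite (cauchy_alt l1 (exp (-l2) * exp (-l2) * Bx) (fun s => exp (-l2) * exp (-l2) * x (n + Z.of_nat s)%Z)); auto.
    + replace (n + Z.of_nat 0)%Z with n by lia. reflexivity.
    + intro s. rewrite Rabs_mult, Rabs_pos_eq. apply Rmult_le_compat_l; auto.
      left; apply Rmult_lt_0_compat; apply exp_pos.
      left; apply Rmult_lt_0_compat; apply exp_pos.
Qed.

Theorem theorem7 (l1 l2 : R) (x : Z -> R) :
  0 < l1 -> 0 < l2 ->
  (exists B : R, forall k : Z, Rabs (x k) <= B) ->
  (forall k : Z, 0 <= sumZ (fun j : Z => sgnZ j * skellam_pmf l1 l2 j * x (k + j)%Z)) ->
  rowcone (fun M => M = skellam_mech l1 l2) x.
Proof.
  intros H1 H2 [Bx Hx] Hpos.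
  assert (H1' : 0 <= l1) by lra. assert (H2' : 0 <= l2) by lra.
  assert (HB : 0 <= Bx). { eapply Rle_trans; [apply Rabs_pos|apply (Hx 0%Z)]. }
  assert (HT : forall t, sumZ (fun j => sgnZ j * skellam_pmf l1 l2 j * x (t + j)%Z) = Tf l1 l2 x t).
  { intro t. rewrite (sumZ_ext _ (fun j => skellam_pmf l1 l2 j * (sgnZ j * x (t + j)%Z))) by (intro; ring).
    rewrite (lemF l1 l2 _ Bx); auto.
    intro z. rewrite Rabs_mult, sgn_abs, Rmult_1_l. auto. }
  assert (HTb : forall t, 0 <= Tf l1 l2 x t <= Bx).
  { intro t. split. rewrite <- HT. auto.
    eapply Rle_trans; [apply Rle_abs|]. unfold Tf. apply pp_bound; auto.
    intro a. apply pp_bound; auto. intro b. rewrite Rabs_mult, sgn_abs, Rmult_1_l. auto. }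
  set (Cc := Bx + 1).
  assert (HC : 0 < Cc) by (unfold Cc; lra).
  set (K := exp (-l1) * exp (-l1) * (exp (-l2) * exp (-l2))).
  assert (HK : 0 < K).
  { unfold K. pose proof (exp_pos (-l1)). pose proof (exp_pos (-l2)).
    apply Rmult_lt_0_compat; apply Rmult_lt_0_compat; auto. }
  set (Af := fun (t u : Z) => if Z.eqb u 0 then Tf l1 l2 x t / Cc
                              else if Z.eqb u 1 then 1 - Tf l1 l2 x t / Cc else 0).
  assert (HTC : forall t, 0 <= Tf l1 l2 x t / Cc <= 1).
  { intro t. destruct (HTb t). split. apply Rdiv_le_0_compat; auto.
    apply Rmult_le_reg_r with Cc; auto. unfold Rdiv. rewrite Rmult_assoc, Rinv_l by lra.
    unfold Cc; lra. }
  assert (HA : is_alg Af).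
  { intro t. split.
    - intro w. unfold Af. destruct (HTC t). destruct (Z.eqb w 0). lra. destruct (Z.eqb w 1); lra.
    - exists 1, 0. split; [|split].
      + replace 1 with (sum_f_R0 (fun k : nat => Af t (Z.of_nat k)) 1).
        apply ev_zero_is. intros k Hk. unfold Af.
        destruct (Z.eqb_spec (Z.of_nat k) 0). exfalso; lia. destruct (Z.eqb_spec (Z.of_nat k) 1). exfalso; lia. auto.
        simpl. unfold Af. simpl. ring.
      + assert (Hz : forall k, Af t (- Z.of_nat (S k))%Z = 0).
        { intro k. unfold Af.
          destruct (Z.eqb_spec (- Z.of_nat (S k))%Z 0). exfalso; lia. destruct (Z.eqb_spec (- Z.of_nat (S k))%Z 1). exfalso; lia. auto. }
        assert (Hs := ev_zero_is (fun k => Af t (- Z.of_nat (S k))%Z) 0 (fun k _ => Hz k)).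
        assert (E : sum_f_R0 (fun k => Af t (- Z.of_nat (S k))%Z) 0 = 0) by apply (Hz 0%nat). rewrite E in Hs. exact Hs.
      + ring. }
  set (Mm := postproc Af (skellam_mech l1 l2)).
  assert (HM : CNF (fun M => M = skellam_mech l1 l2) Mm).
  { apply CNF_post; auto. apply CNF_base. reflexivity. }
  assert (HMx : forall n, Mm n 0%Z = K * x n / Cc).
  { intro n. unfold Mm, postproc, skellam_mech.
    set (v := fun j => skellam_pmf l1 l2 j * (Tf l1 l2 x (n + j)%Z / Cc)).
    assert (Hv : halves_ex v).
    { split.
      - apply exs_le with (fun k => skellam_pmf l1 l2 (Z.of_nat k)).
        intro k. unfold v. rewrite Rabs_mult, Rabs_pos_eq by (apply f_ge0; auto).
        rewrite Rabs_pos_eq by apply HTC. pose proof (HTC (n + Z.of_nat k)%Z). pose proof (f_ge0 l1 l2 (Z.of_nat k) H1' H2'). nra.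
        apply fpos_ex; auto.
      - apply exs_le with (fun k => skellam_pmf l1 l2 (- Z.of_nat (S k))%Z).
        intro k. unfold v. rewrite Rabs_mult, Rabs_pos_eq by (apply f_ge0; auto).
        rewrite Rabs_pos_eq by apply HTC. pose proof (HTC (n + - Z.of_nat (S k))%Z). pose proof (f_ge0 l1 l2 (- Z.of_nat (S k))%Z H1' H2'). nra.
        apply fneg_ex; auto. }
    destruct (shift_all (- n) v Hv) as [_ Es].
    transitivity (sumZ (fun t => v (t + - n)%Z)).
    { apply sumZ_ext. intro t. unfold v, Af. simpl.
      replace (t + - n)%Z with (t - n)%Z by lia. replace (n + (t - n))%Z with t by lia. reflexivity. }
    rewrite Es. unfold v. rewrite (lemF l1 l2 (fun j => Tf l1 l2 x (n + j)%Z / Cc) 1); auto.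
    2:{ intro z. rewrite Rabs_pos_eq; apply HTC. }
    rewrite (Series_ext _ (fun a => (pp l1 a * Series (fun b => pp l2 b * Tf l1 l2 x (n + (Z.of_nat a - Z.of_nat b))%Z)) * / Cc)).
    rewrite Series_scal_r. rewrite (main_id l1 l2 x Bx n); auto. unfold K, Rdiv. ring.
    intro a. rewrite Rmult_assoc. f_equal. rewrite <- Series_scal_r. apply Series_ext. intro b.
    unfold Rdiv. ring. }
  assert (Hxge : forall n, 0 <= x n).
  { intro n. pose proof (main_id l1 l2 x Bx n H1' H2' Hx) as Em.
    assert (0 <= Series (fun c => pp l1 c * Series (fun d => pp l2 d * Tf l1 l2 x (n + (Z.of_nat c - Z.of_nat d))%Z))).
    { apply pp_nonneg with Bx; auto. intro c. split.
      apply pp_nonneg with Bx; auto.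
      eapply Rle_trans; [apply Rle_abs|]. apply pp_bound; auto. intro d.
      rewrite Rabs_pos_eq; apply HTb. }
    rewrite Em in H. fold K in H.
    replace (exp (- l1) * exp (- l1) * (exp (- l2) * exp (- l2) * x n)) with (K * x n) in H by (unfold K; ring).
    nra. }
  destruct (classic (exists n, 0 < x n)) as [[n0 Hn0]|Hno].
  - exists (Cc / K), Mm, 0%Z. split. left. apply Rdiv_lt_0_compat; auto.
    split; auto. split.
    + exists n0. rewrite HMx. apply Rdiv_lt_0_compat; auto. apply Rmult_lt_0_compat; auto.
    + intro n. rewrite HMx. field. split; lra.
  - exists 0, (skellam_mech l1 l2), 0%Z. split; [lra|]. split.
    { apply CNF_base. reflexivity. }
    split.
    + exists 0%Z. unfold skellam_mech. change (0 - 0)%Z with (Z.of_nat 0). rewrite fpos.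
      eapply Rlt_le_trans; [|apply (term_le_ser _ 0)].
      * simpl. unfold pp. simpl. pose proof (exp_pos (-l1)). pose proof (exp_pos (-l2)).
        apply Rmult_lt_0_compat; lra.
      * intro; apply Rmult_le_pos; apply pp_ge0; auto.
      * apply pp_ex_mul with (F := fun b => pp l1 (b + 0)) (Bd := 1) in H2'.
        eapply exs_ext; [|exact H2']. intro; cbv beta; ring.
        intro. rewrite Rabs_pos_eq. apply pp_le1; auto. apply pp_ge0; auto.
    + intro n. assert (x n = 0). { destruct (Hxge n); auto. exfalso; apply Hno; eauto. }
      rewrite H. ring.
Qed.
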